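(* Let $(\mathcal B,T,\langle\!\langle-\rangle\!\rangle,\theta)$ be a bicategory with shadow. Let $\mathcal D$ be a diagram in the shadow category $\mathrm{Sh}(U\mathcal B)$ of the free shadowed bicategory on the underlying graph of $\mathcal B$, such that any two parallel composites in $\mathcal D$ have the same underlying cyclic permutation. Then the image of $\mathcal D$ in $T$ under the counit commutes. In particular, if the edges $X_1,\dots,X_n$ involved form an aperiodic list, every formal diagram in $T$ on them commutes.
   Context: A shadow on a bicategory $\mathcal B$ consists of a category $T$, functors $\langle\!\langle-\rangle\!\rangle:\mathcal B(A,A)\to T$ for each 0-cell $A$, and natural isomorphisms $\theta:\langle\!\langle M\odot N\rangle\!\rangle\cong\langle\!\langle N\odot M\rangle\!\rangle$ for $M\in\mathcal B(A,B)$, $N\in\mathcal B(B,A)$, such that $\theta\circ\theta=\mathrm{id}$, $\ell\circ\theta=r$ as maps $\langle\!\langle X\odot I\rangle\!\rangle\to\langle\!\langle X\rangle\!\rangle$, and $\theta\circ\alpha\circ\theta=\alpha\circ\theta\circ\alpha$ as maps $\langle\!\langle (X\odot Y)\odot Z\rangle\!\rangle\to\langle\!\langle Y\odot(Z\odot X)\rangle\!\rangle$ (i.e. $\langle\!\langle (X\odot Y)\odot Z\rangle\!\rangle\xrightarrow{\theta}\langle\!\langle Z\odot(X\odot Y)\rangle\!\rangle\xrightarrow{\alpha}\langle\!\langle (Z\odot X)\odot Y\rangle\!\rangle\xrightarrow{\theta}\langle\!\langle Y\odot(Z\odot X)\rangle\!\rangle$ equals $\langle\!\langle (X\odot Y)\odot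 Z\rangle\!\rangle\xrightarrow{\alpha}\langle\!\langle X\odot(Y\odot Z)\rangle\!\rangle\xrightarrow{\theta}\langle\!\langle (Y\odot Z)\odot X\rangle\!\rangle\xrightarrow{\alpha}\langle\!\langle Y\odot(Z\odot X)\rangle\!\rangle$). Strict maps of shadowed bicategories are strict functors with a functor of shadow categories strictly commuting with all structure. The forgetful functor to directed graphs takes the underlying graph $U\mathcal B$ (0-cells and 1-cells). Its left adjoint sends a graph $G$ to $(\mathcal F(G),\mathrm{Sh}(G))$, where $\mathcal F(G)$ is the free bicategory on $G$ (1-cells: parenthesized composable words in edges and formal units; 2-cells: generated by whiskered associators/unitors modulo the bicategory axioms), and $\mathrm{Sh}(G)$ has objects $\langle\!\langle w\rangle\!\rangle$ for $w$ an endomorphism 1-cell of $\mathcal F(G)$, morphisms generated by whiskered associators/unitors inside $w$ and rotators $\theta:\langle\!\langle A\odot B\rangle\!\rangle\cong\langle\!\langle B\odot A\rangle\!\rangle$ applied to the outermost product, modulo the bicategory relations, the shadow axioms and naturality of $\theta$. A morphism of $\mathrm{Sh}(G)$ induces a bijection between the edge occurrences (letters) of source and target, which is a cyclic permutation ($\theta$ rotates; other generators preserve order); this is its underlying cyclic permutation. A formal diagram in $T$ is the image of a diagram in $\mathrm{Sh}(U\mathcal B)$ under the counit. A list $X_1,\dots,X_n$ of edges is aperiodic if no nontrivial cyclic rotation of the list returns the same list. *)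

(* Defs.v *)
From Stdlib Require List.
From mathcomp Require Import all_boot.

Set Implicit Arguments.
Unset Strict Implicit.
Unset Printing Implicit Defensive.

(* Bicategories.  1-cell composition is written in diagrammatic order:  *)
(* comp1 M N = M ⊙ N for M : A -> B, N : B -> C.  Vertical composition  *)
(* vcomp a b is "first a, then b".                                       *)
Record Bicat := {
  ob : Type;
  hom : ob -> ob -> Type;
  cell : forall A B, hom A B -> hom A B -> Type;
  id2 : forall A B (f : hom A B), cell f f;
  vcomp : forall A B (f g h : hom A B), cell f g -> cell g h -> cell f h;
  comp1 : forall A B C, hom A B -> hom B C -> hom A C;
  unit1 : forall A, hom A A;
  hcomp : forall A B C (f f' : hom A B) (g g' : hom B C),
      cell f f' -> cell g g' -> cell (comp1 f g) (comp1 f' g');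
  assoc : forall A B C D (f : hom A B) (g : hom B C) (h : hom C D),
      cell (comp1 (comp1 f g) h) (comp1 f (comp1 g h));
  assoc_inv : forall A B C D (f : hom A B) (g : hom B C) (h : hom C D),
      cell (comp1 f (comp1 g h)) (comp1 (comp1 f g) h);
  lunit : forall A B (f : hom A B), cell (comp1 (unit1 A) f) f;
  lunit_inv : forall A B (f : hom A B), cell f (comp1 (unit1 A) f);
  runit : forall A B (f : hom A B), cell (comp1 f (unit1 B)) f;
  runit_inv : forall A B (f : hom A B), cell f (comp1 f (unit1 B));
  vcomp_id_l : forall A B (f g : hom A B) (a : cell f g), vcomp (id2 f) a = a;
  vcomp_id_r : forall A B (f g : hom A B) (a : cell f g), vcomp a (id2 g) = a;
  vcomp_assoc : forall A B (f g h k : hom A B) (a : cell f g) (b : cell g h)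
      (c : cell h k), vcomp a (vcomp b c) = vcomp (vcomp a b) c;
  hcomp_id : forall A B C (f : hom A B) (g : hom B C),
      hcomp (id2 f) (id2 g) = id2 (comp1 f g);
  hcomp_vcomp : forall A B C (f f' f'' : hom A B) (g g' g'' : hom B C)
      (a : cell f f') (a' : cell f' f'') (b : cell g g') (b' : cell g' g''),
      hcomp (vcomp a a') (vcomp b b') = vcomp (hcomp a b) (hcomp a' b');
  assoc_nat : forall A B C D (f f' : hom A B) (g g' : hom B C) (h h' : hom C D)
      (a : cell f f') (b : cell g g') (c : cell h h'),
      vcomp (hcomp (hcomp a b) c) (assoc f' g' h')
      = vcomp (assoc f g h) (hcomp a (hcomp b c));
  lunit_nat : forall A B (f f' : hom A B) (a : cell f f'),
      vcomp (hcomp (id2 (unit1 A)) a) (lunit f') = vcomp (lunit f) a;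
  runit_nat : forall A B (f f' : hom A B) (a : cell f f'),
      vcomp (hcomp a (id2 (unit1 B))) (runit f') = vcomp (runit f) a;
  assoc_iso1 : forall A B C D (f : hom A B) (g : hom B C) (h : hom C D),
      vcomp (assoc f g h) (assoc_inv f g h) = id2 _;
  assoc_iso2 : forall A B C D (f : hom A B) (g : hom B C) (h : hom C D),
      vcomp (assoc_inv f g h) (assoc f g h) = id2 _;
  lunit_iso1 : forall A B (f : hom A B), vcomp (lunit f) (lunit_inv f) = id2 _;
  lunit_iso2 : forall A B (f : hom A B), vcomp (lunit_inv f) (lunit f) = id2 _;
  runit_iso1 : forall A B (f : hom A B), vcomp (runit f) (runit_inv f) = id2 _;
  runit_iso2 : forall A B (f : hom A B), vcomp (runit_inv f) (runit f) = id2 _;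
  pentagon : forall A B C D E (f : hom A B) (g : hom B C) (h : hom C D)
      (k : hom D E),
      vcomp (assoc (comp1 f g) h k) (assoc f g (comp1 h k))
      = vcomp (hcomp (assoc f g h) (id2 k))
          (vcomp (assoc f (comp1 g h) k) (hcomp (id2 f) (assoc g h k)));
  triangle : forall A B C (f : hom A B) (g : hom B C),
      vcomp (assoc f (unit1 B) g) (hcomp (id2 f) (lunit g))
      = hcomp (runit f) (id2 g)
}.

Arguments id2 {b0 A B} f.
Arguments vcomp {b0 A B f g h} _ _.
Arguments comp1 {b0 A B C} _ _.
Arguments unit1 {b0} A.
Arguments hcomp {b0 A B C f f' g g'} _ _.
Arguments assoc {b0 A B C D} f g h.
Arguments assoc_inv {b0 A B C D} f g h.
Arguments lunit {b0 A B} f.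
Arguments lunit_inv {b0 A B} f.
Arguments runit {b0 A B} f.
Arguments runit_inv {b0 A B} f.
Arguments cell {b0 A B} _ _.
Arguments hom {b0} _ _.

(* Shadows on a bicategory.  tcomp is diagrammatic ("first, then").    *)
Record Shadow (B : Bicat) := {
  tob : Type;
  tmor : tob -> tob -> Type;
  tid : forall x, tmor x x;
  tcomp : forall x y z, tmor x y -> tmor y z -> tmor x z;
  tcomp_id_l : forall x y (f : tmor x y), tcomp (tid x) f = f;
  tcomp_id_r : forall x y (f : tmor x y), tcomp f (tid y) = f;
  tcomp_assoc : forall x y z w (f : tmor x y) (g : tmor y z) (h : tmor z w),
      tcomp f (tcomp g h) = tcomp (tcomp f g) h;
  sh : forall A : ob B, @hom B A A -> tob;
  shmap : forall A (f g : @hom B A A), cell f g -> tmor (sh f) (sh g);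
  shmap_id : forall A (f : @hom B A A), shmap (id2 f) = tid (sh f);
  shmap_comp : forall A (f g h : @hom B A A) (a : cell f g) (b : cell g h),
      shmap (vcomp a b) = tcomp (shmap a) (shmap b);
  theta : forall (A C : ob B) (M : hom A C) (N : hom C A),
      tmor (sh (comp1 M N)) (sh (comp1 N M));
  theta_nat : forall (A C : ob B) (M M' : hom A C) (N N' : hom C A)
      (a : cell M M') (b : cell N N'),
      tcomp (shmap (hcomp a b)) (theta M' N') = tcomp (theta M N) (shmap (hcomp b a));
  theta_invol : forall (A C : ob B) (M : hom A C) (N : hom C A),
      tcomp (theta M N) (theta N M) = tid _;
  theta_unit : forall (A : ob B) (X : hom A A),
      tcomp (theta X (unit1 A)) (shmap (lunit X)) = shmap (runit X);
  theta_hex : forall (A C E : ob B) (X : hom A C) (Y : hom C E) (Z : hom E A),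
      tcomp (theta (comp1 X Y) Z)
        (tcomp (shmap (assoc_inv Z X Y)) (theta (comp1 Z X) Y))
      = tcomp (shmap (assoc X Y Z))
          (tcomp (theta X (comp1 Y Z)) (shmap (assoc Y Z X)))
}.

Arguments tmor {B} s _ _.
Arguments tcomp {B s x y z} _ _.
Arguments tid {B s} x.
Arguments sh {B s A} _.
Arguments shmap {B s A f g} _.
Arguments theta {B s A C} M N.

(* The free shadowed bicategory on the underlying graph U B:            *)
(* formal 1-cells (parenthesized words of edges and formal units),      *)
(* formal 2-cells, formal shadow morphisms (as generating terms).       *)
Inductive Word (B : Bicat) : ob B -> ob B -> Type :=
| WEdge : forall A C, @hom B A C -> @Word B A C
| WUnit : forall A, @Word B A A
| WComp : forall A C D, @Word B A C -> @Word B C D -> @Word B A D.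

Arguments WEdge {B A C} _.
Arguments WUnit {B} A.
Arguments WComp {B A C D} _ _.

Inductive FCell (B : Bicat) : forall A C : ob B, @Word B A C -> @Word B A C -> Type :=
| FId : forall A C (w : @Word B A C), FCell w w
| FVcomp : forall A C (u v w : @Word B A C), FCell u v -> FCell v w -> FCell u w
| FWhiskL : forall A C D (x : @Word B A C) (u v : @Word B C D),
    FCell u v -> FCell (WComp x u) (WComp x v)
| FWhiskR : forall A C D (u v : @Word B A C) (x : @Word B C D),
    FCell u v -> FCell (WComp u x) (WComp v x)
| FAssoc : forall A C D E (u : @Word B A C) (v : @Word B C D) (w : @Word B D E),
    FCell (WComp (WComp u v) w) (WComp u (WComp v w))
| FAssocInv : forall A C D E (u : @Word B A C) (v : @Word B C D) (w : @Word B D E),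
    FCell (WComp u (WComp v w)) (WComp (WComp u v) w)
| FLunit : forall A C (u : @Word B A C), FCell (WComp (WUnit A) u) u
| FLunitInv : forall A C (u : @Word B A C), FCell u (WComp (WUnit A) u)
| FRunit : forall A C (u : @Word B A C), FCell (WComp u (WUnit C)) u
| FRunitInv : forall A C (u : @Word B A C), FCell u (WComp u (WUnit C)).

Inductive FSh (B : Bicat) : forall A : ob B, @Word B A A -> forall A' : ob B, @Word B A' A' -> Type :=
| FShId : forall A (w : @Word B A A), FSh w w
| FShComp : forall A1 A2 A3 (w1 : @Word B A1 A1) (w2 : @Word B A2 A2) (w3 : @Word B A3 A3),
    FSh w1 w2 -> FSh w2 w3 -> FSh w1 w3
| FShCell : forall A (w w' : @Word B A A), FCell w w' -> FSh w w'
| FShTheta : forall A C (u : @Word B A C) (v : @Word B C A), FSh (WComp u v) (WComp v u).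

(* Edges of the underlying graph U B: 1-cells of B. *)
Definition Edge (B : Bicat) := {X : ob B & {Y : ob B & @hom B X Y}}.

Fixpoint letters (B : Bicat) A C (w : @Word B A C) : seq (Edge B) :=
  match w with
  | @WEdge _ X Y M => [:: existT _ X (existT _ Y M)]
  | WUnit _ => [::]
  | WComp _ _ _ u v => letters u ++ letters v
  end.

(* Underlying cyclic permutation: the morphism sends the letter list l of
   its source to rot (shift f) l, the letter list of its target; the
   permutation is determined by shift f modulo size l. *)
Fixpoint shift (B : Bicat) A (w : @Word B A A) A' (w' : @Word B A' A')
  (f : FSh w w') : nat :=
  match f with
  | FShId _ _ => 0
  | FShComp _ _ _ _ _ _ g h => shift g + shift h
  | FShCell _ _ _ _ => 0
  | FShTheta _ _ u _ => size (letters u)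
  end.

(* The counit: interpretation of formal cells in B and in T. *)
Fixpoint evalW (B : Bicat) A C (w : @Word B A C) : @hom B A C :=
  match w in @Word _ A0 C0 return @hom B A0 C0 with
  | WEdge _ _ M => M
  | WUnit A0 => unit1 A0
  | WComp _ _ _ u v => comp1 (evalW u) (evalW v)
  end.

Fixpoint evalC (B : Bicat) A C (u v : @Word B A C) (c : FCell u v)
  : cell (evalW u) (evalW v) :=
  match c in @FCell _ A0 C0 u0 v0 return cell (evalW u0) (evalW v0) with
  | FId _ _ w => id2 (evalW w)
  | FVcomp _ _ _ _ _ a b => vcomp (evalC a) (evalC b)
  | FWhiskL _ _ _ x _ _ a => hcomp (id2 (evalW x)) (evalC a)
  | FWhiskR _ _ _ _ _ x a => hcomp (evalC a) (id2 (evalW x))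
  | FAssoc _ _ _ _ u0 v0 w0 => assoc (evalW u0) (evalW v0) (evalW w0)
  | FAssocInv _ _ _ _ u0 v0 w0 => assoc_inv (evalW u0) (evalW v0) (evalW w0)
  | FLunit _ _ u0 => lunit (evalW u0)
  | FLunitInv _ _ u0 => lunit_inv (evalW u0)
  | FRunit _ _ u0 => runit (evalW u0)
  | FRunitInv _ _ u0 => runit_inv (evalW u0)
  end.

Fixpoint evalSh (B : Bicat) (S : Shadow B) A (w : @Word B A A) A' (w' : @Word B A' A')
  (f : FSh w w') : tmor S (sh (evalW w)) (sh (evalW w')) :=
  match f in @FSh _ A0 w0 A0' w0'
    return tmor S (sh (evalW w0)) (sh (evalW w0')) with
  | FShId _ w0 => tid _
  | FShComp _ _ _ _ _ _ g h => tcomp (evalSh S g) (evalSh S h)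
  | FShCell _ _ _ c => shmap (evalC c)
  | FShTheta _ _ u v => theta (evalW u) (evalW v)
  end.

Definition ShObj (B : Bicat) := {A : ob B & @Word B A A}.
Definition FShO (B : Bicat) (x y : ShObj B) := FSh (projT2 x) (projT2 y).
Definition Arrow (B : Bicat) := {x : ShObj B & {y : ShObj B & FShO x y}}.
Definition arr_src (B : Bicat) (a : Arrow B) : ShObj B := projT1 a.
Definition arr_tgt (B : Bicat) (a : Arrow B) : ShObj B := projT1 (projT2 a).

(* A diagram is given by its (finite) list of arrows; composites are the
   composites of composable paths of arrows of the diagram (including
   the empty path = identity). *)
Definition Diagram (B : Bicat) := seq (Arrow B).

Inductive Composite (B : Bicat) (D : Diagram B) : forall x y : ShObj B, FShO x y -> Prop :=
| CNil : forall x, @Composite B D x x (FShId (projT2 x))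
| CCons : forall x y z (f : FShO x y) (g : FShO y z),
    List.In (existT _ x (existT _ y f)) D ->
    @Composite B D y z g -> @Composite B D x z (FShComp f g).

Arguments Composite {B} D x y _.

Definition same_cyc_perm (B : Bicat) (D : Diagram B) : Prop :=
  forall (x y : ShObj B) (f g : FShO x y),
    Composite D x y f -> Composite D x y g ->
    shift f = shift g %[mod size (letters (projT2 x))].

Definition image_commutes (B : Bicat) (S : Shadow B) (D : Diagram B) : Prop :=
  forall (x y : ShObj B) (f g : FShO x y),
    Composite D x y f -> Composite D x y g -> evalSh S f = evalSh S g.

Definition aperiodic (T : Type) (l : seq T) : Prop :=
  forall k, 0 < k < size l -> rot k l <> l.

(* D is a formal diagram "on" the edges Xs: the letters of every object
   of D form a cyclic rotation of Xs. *)
Definition diagram_on (B : Bicat) (Xs : seq (Edge B)) (D : Diagram B) : Prop :=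
  forall a, List.In a D ->
    (exists k, letters (projT2 (arr_src a)) = rot k Xs) /\
    (exists k, letters (projT2 (arr_tgt a)) = rot k Xs).

(* Main.v *)
Require Import Defs.
From mathcomp Require Import all_boot.
From Stdlib Require Import ProofIrrelevance.

Set Implicit Arguments.
Unset Strict Implicit.
Unset Printing Implicit Defensive.

Section Coh.
Variable B : Bicat.

Local Notation "a ** b" := (vcomp a b) (at level 40, left associativity).
Local Notation "a <o> b" := (hcomp a b) (at level 35).

Inductive NW : ob B -> ob B -> Type :=
| NNil : forall A, NW A A
| NCons : forall A C D, @hom B A C -> NW C D -> NW A D.
Arguments NCons {A C D} _ _.

Fixpoint embed A C (n : NW A C) : Word A C :=
  match n in NW A0 C0 return Word A0 C0 with
  | NNil A0 => WUnit A0
  | NCons _ _ _ M t => WComp (WEdge M) (embed t)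
  end.

Fixpoint app A C (w : Word A C) D (t : NW C D) {struct w} : NW A D :=
  match w in @Word _ A0 C0 return NW C0 D -> NW A0 D with
  | WEdge _ _ M => fun t => NCons M t
  | WUnit _ => fun t => t
  | WComp _ _ _ u v => fun t => app u (app v t)
  end t.

Fixpoint norm A C (u : Word A C) D (t : NW C D) {struct u}
  : FCell (WComp u (embed t)) (embed (app u t)) :=
  match u as u0 in @Word _ A0 C0 return forall t : NW C0 D,
     FCell (WComp u0 (embed t)) (embed (app u0 t)) with
  | WEdge _ _ M => fun t => FId _
  | WUnit A0 => fun t => FLunit (embed t)
  | WComp _ _ _ u1 v1 => fun t => FVcomp (FAssoc u1 v1 (embed t))
       (FVcomp (FWhiskL u1 (norm v1 t)) (norm u1 (app v1 t)))
  end t.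

Fixpoint finv A C (u v : Word A C) (c : FCell u v) : FCell v u :=
  match c in @FCell _ A0 C0 p0 q0 return FCell q0 p0 with
  | FId _ _ w => FId w
  | FVcomp _ _ _ _ _ a b => FVcomp (finv b) (finv a)
  | FWhiskL _ _ _ x _ _ a => FWhiskL x (finv a)
  | FWhiskR _ _ _ _ _ x a => FWhiskR x (finv a)
  | FAssoc _ _ _ _ u0 v0 w0 => FAssocInv u0 v0 w0
  | FAssocInv _ _ _ _ u0 v0 w0 => FAssoc u0 v0 w0
  | FLunit _ _ u0 => FLunitInv u0
  | FLunitInv _ _ u0 => FLunit u0
  | FRunit _ _ u0 => FRunitInv u0
  | FRunitInv _ _ u0 => @FRunit B _ _ u0
  end.

Lemma vA A C (f g h k : @hom B A C) (a : cell f g) (b : cell g h) (c : cell h k) :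
  a ** (b ** c) = a ** b ** c.
Proof. exact: vcomp_assoc. Qed.
Lemma v1l A C (f g : @hom B A C) (a : cell f g) : id2 f ** a = a.
Proof. exact: vcomp_id_l. Qed.
Lemma v1r A C (f g : @hom B A C) (a : cell f g) : a ** id2 g = a.
Proof. exact: vcomp_id_r. Qed.

Lemma hid A C D (f : @hom B A C) (g : @hom B C D) : id2 f <o> id2 g = id2 (comp1 f g).
Proof. exact: hcomp_id. Qed.

Lemma whL A C D (x : @hom B A C) (f g h : @hom B C D) (a : cell f g) (b : cell g h) :
  (id2 x <o> a) ** (id2 x <o> b) = id2 x <o> (a ** b).
Proof. by rewrite -hcomp_vcomp v1l. Qed.
Lemma whR A C D (x : @hom B C D) (f g h : @hom B A C) (a : cell f g) (b : cell g h) :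
  (a <o> id2 x) ** (b <o> id2 x) = (a ** b) <o> id2 x.
Proof. by rewrite -hcomp_vcomp v1l. Qed.
Lemma xchg A C D (f f' : @hom B A C) (g g' : @hom B C D) (a : cell f f') (b : cell g g') :
  (a <o> id2 g) ** (id2 f' <o> b) = (id2 f <o> b) ** (a <o> id2 g').
Proof. by rewrite -!hcomp_vcomp !v1l !v1r. Qed.
Lemma hsplit A C D (f f' : @hom B A C) (g g' : @hom B C D) (a : cell f f') (b : cell g g') :
  a <o> b = (a <o> id2 g) ** (id2 f' <o> b).
Proof. by rewrite -!hcomp_vcomp !v1l !v1r. Qed.

Lemma fiso A C (u v : Word A C) (c : FCell u v) :
  evalC c ** evalC (finv c) = id2 _ /\ evalC (finv c) ** evalC c = id2 _.
Proof.
elim: c => /=.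
- by move=> *; rewrite v1l.
- move=> A0 C0 u0 v0 w0 a [h1 h2] b [h3 h4]; split.
  + by rewrite -vA (vA (evalC b)) h3 v1l h1.
  + by rewrite -vA (vA (evalC (finv a))) h2 v1l h4.
- move=> A0 C0 D0 x u0 v0 a [h1 h2]; by rewrite !whL h1 h2 !hid.
- move=> A0 C0 D0 u0 v0 x a [h1 h2]; by rewrite !whR h1 h2 !hid.
- move=> *; split; [exact: assoc_iso1|exact: assoc_iso2].
- move=> *; split; [exact: assoc_iso2|exact: assoc_iso1].
- move=> *; split; [exact: lunit_iso1|exact: lunit_iso2].
- move=> *; split; [exact: lunit_iso2|exact: lunit_iso1].
- move=> *; split; [exact: runit_iso1|exact: runit_iso2].
- move=> *; split; [exact: runit_iso2|exact: runit_iso1].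
Qed.

Lemma cancelL A C (f g h : @hom B A C) (a : cell f g) (a' : cell g f) (x y : cell g h) :
  a' ** a = id2 _ -> a ** x = a ** y -> x = y.
Proof. by move=> H E; rewrite -(v1l x) -(v1l y) -H -!vA E. Qed.
Lemma cancelR A C (f g h : @hom B A C) (a : cell g h) (a' : cell h g) (x y : cell f g) :
  a ** a' = id2 _ -> x ** a = y ** a -> x = y.
Proof. by move=> H E; rewrite -(v1r x) -(v1r y) -H !vA E. Qed.

Lemma faithL A C (f g : @hom B A C) (a b : cell f g) :
  id2 (unit1 A) <o> a = id2 (unit1 A) <o> b -> a = b.
Proof.
move=> E; apply: (cancelL (a' := lunit_inv f)); first exact: lunit_iso2.
by rewrite -!lunit_nat E.
Qed.

Lemma kelly A C D (f : @hom B A C) (g : @hom B C D) :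
  assoc (unit1 A) f g ** lunit (comp1 f g) = lunit f <o> id2 g.
Proof.
set I := unit1 A.
apply: faithL.
have P := pentagon I I f g.
have T1 := triangle I (comp1 f g).
have T2 := triangle I f.
have N1 := assoc_nat (runit I) (id2 f) (id2 g).
have N2 := assoc_nat (id2 I) (lunit f) (id2 g).
rewrite hid in N1.
apply: (cancelL (a := (assoc I I f <o> id2 g) ** assoc I (comp1 I f) g)
                (a' := assoc_inv I (comp1 I f) g ** (assoc_inv I I f <o> id2 g))).
  by rewrite -vA (vA (_ <o> _)) whR assoc_iso2 hid v1l assoc_iso2.
rewrite -whL !vA -(vA _ _ (id2 I <o> assoc I f g)) -P; rewrite /I in P T1 T2 N1 N2 *. rewrite -(vA (assoc (comp1 _ _) f g)) T1 -N1 -T2 -whR -!vA N2 !vA.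
done.
Qed.

Definition ecell A C (n m : NW A C) (e : n = m) : cell (evalW (embed n)) (evalW (embed m)) :=
  match e with erefl => id2 _ end.

Lemma ecell_refl A C (n : NW A C) (e : n = n) : ecell e = id2 _.
Proof. by rewrite (proof_irrelevance _ e erefl). Qed.

Lemma ecell_comp A C (n m k : NW A C) (e1 : n = m) (e2 : m = k) (e3 : n = k) :
  ecell e1 ** ecell e2 = ecell e3.
Proof. subst. by rewrite !ecell_refl v1l. Qed.

Lemma ecell_nat A C D (x : Word A C) (t1 t2 : NW C D) (e : t1 = t2) (e' : app x t1 = app x t2) :
  (id2 (evalW x) <o> ecell e) ** evalC (norm x t2) = evalC (norm x t1) ** ecell e'.
Proof. subst. by rewrite !ecell_refl hid v1l v1r. Qed.

Lemma appE A C (u v : Word A C) (c : FCell u v) D (t : NW C D) : app u t = app v t.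
Proof.
elim: c D t => //=; congruence.
Qed.

Lemma key_assoc A C D E (u : Word A C) (v : Word C D) (w : Word D E) F (t : NW E F) :
  (assoc (evalW u) (evalW v) (evalW w) <o> id2 (evalW (embed t))) ** evalC (norm (WComp u (WComp v w)) t)
  = evalC (norm (WComp (WComp u v) w) t).
Proof.
rewrite /=.
have P := pentagon (evalW u) (evalW v) (evalW w) (evalW (embed t)).
rewrite !vA in P.
rewrite -!whL !vA -P -[id2 (comp1 (evalW u) (evalW v))]hid -(vA (assoc (comp1 _ _) _ _) ((_ <o> _) <o> _)) assoc_nat !vA. reflexivity.
Qed.

Lemma key_lunit A C (u : Word A C) D (t : NW C D) :
  (lunit (evalW u) <o> id2 (evalW (embed t))) ** evalC (norm u t)
  = evalC (norm (WComp (WUnit A) u) t).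
Proof. by rewrite /= lunit_nat vA kelly. Qed.

Lemma key_runit A C (u : Word A C) D (t : NW C D) :
  (runit (evalW u) <o> id2 (evalW (embed t))) ** evalC (norm u t)
  = evalC (norm (WComp u (WUnit C)) t).
Proof. by rewrite /= vA triangle. Qed.

Lemma key A C (u v : Word A C) (c : FCell u v) D (t : NW C D) (e : app u t = app v t) :
  (evalC c <o> id2 (evalW (embed t))) ** evalC (norm v t) = evalC (norm u t) ** ecell e.
Proof.
elim: c D t e.
- by move=> A0 C0 w D t e; rewrite hid v1l ecell_refl v1r.
- move=> A0 C0 u0 v0 w0 a IHa b IHb D t e /=.
  by rewrite -whR -vA (IHb D t (appE b t)) vA (IHa D t (appE a t)) -vA ecell_comp.
- move=> A0 C0 D0 x u0 v0 a IH D t e /=.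
  rewrite vA assoc_nat -(vA (assoc _ _ _)) (vA (_ <o> (_ <o> _))) whL (IH D t (appE a t)) -whL.
  by rewrite -!vA ecell_nat.
- move=> A0 C0 D0 u0 v0 x a IH D t e /=.
  rewrite vA assoc_nat hid -(vA (assoc _ _ _)) (vA (_ <o> _)) xchg -!vA (IH _ _ e) !vA.
  reflexivity.
- by move=> *; rewrite key_assoc ecell_refl v1r.
- move=> A0 C0 D0 E0 u0 v0 w0 D t e.
  by rewrite -key_assoc vA whR assoc_iso2 hid v1l ecell_refl v1r.
- by move=> *; rewrite key_lunit ecell_refl v1r.
- move=> A0 C0 u0 D t e.
  by rewrite -key_lunit vA whR lunit_iso2 hid v1l ecell_refl v1r.
- by move=> *; rewrite key_runit ecell_refl v1r.
- move=> A0 C0 u0 D t e.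
  by rewrite -key_runit vA whR runit_iso2 hid v1l ecell_refl v1r.
Qed.

Theorem coh (A C : ob B) (u v : Word A C) (c1 c2 : FCell u v) : evalC c1 = evalC c2.
Proof.
have K1 := key c1 (appE c1 (NNil C)).
have K2 := key c2 (appE c1 (NNil C)).
rewrite -K2 in K1.
have [H1 _] := fiso (norm v (NNil C)).
have E := cancelR H1 K1.
apply: (cancelL (a := runit (evalW u)) (a' := runit_inv (evalW u))); first exact: runit_iso2.
by rewrite -!runit_nat E.
Qed.

Variable S : Shadow B.

Definition ShN := {A : ob B & NW A A}.
Definition evalS (y : ShN) : tob S := sh (evalW (embed (projT2 y))).
Definition eqmor (y z : ShN) (e : y = z) : tmor S (evalS y) (evalS z) :=
  match e with erefl => tid _ end.

Definition castN A D (e : D = A) (n : NW A D) : NW A A := eq_rect D (NW A) n A e.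

Definition rotNC A C (X : @hom B A C) (t : NW C A) :
  {y : ShN & FSh (WComp (WEdge X) (embed t)) (embed (projT2 y))} :=
  existT _ (existT _ C (app (embed t) (NCons X (NNil C))))
    (FShComp (FShTheta (WEdge X) (embed t))
      (FShCell (FVcomp (FWhiskL (embed t) (FRunitInv (WEdge X))) (norm (embed t) (NCons X (NNil C)))))).

Definition rotG A D (n : NW A D) : forall e : D = A,
  {y : ShN & FSh (embed (castN e n)) (embed (projT2 y))}.
Proof.
case: n => [A0|A0 C0 D0 X t] e.
- exact (existT _ (existT _ A0 (castN e (NNil A0))) (FShId _)).
- subst D0. exact (rotNC X t).
Defined.

Definition rotSh (x : ShN) : {y : ShN & FSh (embed (projT2 x)) (embed (projT2 y))} :=
  rotG (projT2 x) erefl.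

Fixpoint R (k : nat) (x : ShN) : {y : ShN & FSh (embed (projT2 x)) (embed (projT2 y))} :=
  match k with
  | 0 => existT _ x (FShId _)
  | k'.+1 => existT _ (projT1 (R k' (projT1 (rotSh x))))
                (FShComp (projT2 (rotSh x)) (projT2 (R k' (projT1 (rotSh x)))))
  end.

Definition rotN k x := projT1 (R k x).
Definition RM k x : tmor S (evalS x) (evalS (rotN k x)) := evalSh S (projT2 (R k x)).

Lemma rotSh_cons A C (X : @hom B A C) (t : NW C A) :
  rotSh (existT _ A (NCons X t)) = rotNC X t.
Proof. reflexivity. Qed.

Local Notation "a >>> b" := (tcomp a b) (at level 40, left associativity).

Lemma tA (x y z w : tob S) (f : tmor S x y) (g : tmor S y z) (h : tmor S z w) :
  f >>> (g >>> h) = f >>> g >>> h.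
Proof. exact: tcomp_assoc. Qed.
Lemma t1l (x y : tob S) (f : tmor S x y) : tid x >>> f = f.
Proof. exact: tcomp_id_l. Qed.
Lemma t1r (x y : tob S) (f : tmor S x y) : f >>> tid y = f.
Proof. exact: tcomp_id_r. Qed.

Lemma eqmor_refl (y : ShN) (e : y = y) : eqmor e = tid _.
Proof. by rewrite (proof_irrelevance _ e erefl). Qed.

Lemma eqmor_comp (y z w : ShN) (e1 : y = z) (e2 : z = w) (e3 : y = w) :
  eqmor e1 >>> eqmor e2 = eqmor e3.
Proof. subst. by rewrite !eqmor_refl t1l. Qed.

Lemma eqmor_RM j (y z : ShN) (e : y = z) :
  eqmor e >>> RM j z = RM j y >>> eqmor (f_equal (rotN j) e).
Proof. subst. by rewrite !eqmor_refl t1l t1r. Qed.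

Lemma rotN_add k j x : rotN (k + j) x = rotN j (rotN k x).
Proof. by elim: k x => [|k IH] x //=; exact: IH. Qed.

Lemma RM_add k j x (E : rotN (k + j) x = rotN j (rotN k x)) :
  RM (k + j) x >>> eqmor E = RM k x >>> RM j (rotN k x).
Proof.
elim: k x E => [|k IH] x E.
  change (RM j x >>> eqmor (E : rotN j x = rotN j x) = tid _ >>> RM j x).
  by rewrite eqmor_refl t1l t1r.
have H := IH (projT1 (rotSh x)) E.
change (evalSh S (projT2 (rotSh x)) >>> RM (k+j) (projT1 (rotSh x)) >>> eqmor E =
  evalSh S (projT2 (rotSh x)) >>> RM k (projT1 (rotSh x)) >>> RM j (rotN k (projT1 (rotSh x)))).
by rewrite -!tA H.
Qed.

Definition Req k (x z : ShN) (m : tmor S (evalS x) (evalS z)) : Prop :=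
  exists e : rotN k x = z, m = RM k x >>> eqmor e.
Arguments Req : clear implicits.

Lemma Req_add k j x y z m1 m2 : Req k x y m1 -> Req j y z m2 -> Req (k + j) x z (m1 >>> m2).
Proof.
case=> e1 -> [e2 ->]. subst y z.
exists (rotN_add k j x).
by rewrite /= !t1r RM_add.
Qed.

Lemma Req_uniq k x z z' m1 m : Req k x z m1 -> Req k x z' m -> exists e : z' = z, m1 = m >>> eqmor e.
Proof.
case=> e1 -> [e2 ->]. subst z z'. exists erefl. by rewrite !eqmor_refl !t1r.
Qed.

Lemma Req0 x z (e : x = z) : Req 0 x z (eqmor e).
Proof. exists e. by rewrite /= t1l. Qed.

Lemma Req0_inv x z m : Req 0 x z m -> exists e : x = z, m = eqmor e.
Proof. case=> e ->. exists e. by rewrite /= t1l. Qed.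

Definition ncell A C (w : Word A C) : FCell w (embed (app w (NNil C))) :=
  FVcomp (FRunitInv w) (norm w (NNil C)).
Definition nx (A : ob B) (w : Word A A) : ShN := existT _ A (app w (NNil A)).
Definition Cm (A : ob B) (w : Word A A) : tmor S (sh (evalW w)) (evalS (nx w)) :=
  shmap (evalC (ncell w)).
Definition Ci (A : ob B) (w : Word A A) : tmor S (evalS (nx w)) (sh (evalW w)) :=
  shmap (evalC (finv (ncell w))).

Definition Good k (A A' : ob B) (w : Word A A) (w' : Word A' A')
  (m : tmor S (sh (evalW w)) (sh (evalW w'))) : Prop :=
  exists m', Req k (nx w) (nx w') m' /\ m = Cm w >>> m' >>> Ci w'.
Arguments Good k {A A'} w w' m.

Lemma shcoh (A : ob B) (u v : Word A A) (c1 c2 : FCell u v) :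
  shmap (evalC c1) = shmap (evalC c2) :> tmor S _ _.
Proof. by rewrite (coh c1 c2). Qed.

Lemma CiCm (A : ob B) (w : Word A A) : Ci w >>> Cm w = tid _.
Proof.
rewrite /Ci /Cm -shmap_comp.
have -> : evalC (finv (ncell w)) ** evalC (ncell w) = evalC (FId _) :=
  coh (FVcomp (finv (ncell w)) (ncell w)) (FId _).
by rewrite shmap_id.
Qed.

Lemma CmCi (A : ob B) (w : Word A A) : Cm w >>> Ci w = tid _.
Proof.
rewrite /Ci /Cm -shmap_comp.
have -> : evalC (ncell w) ** evalC (finv (ncell w)) = evalC (FId _) :=
  coh (FVcomp (ncell w) (finv (ncell w))) (FId _).
by rewrite shmap_id.
Qed.

Definition castF A C (n m : NW A C) (e : n = m) : FCell (embed n) (embed m) :=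
  match e with erefl => FId _ end.

Lemma eqmor_cast (A : ob B) (n n' : NW A A) (E : n = n') :
  eqmor (f_equal (existT (fun A => NW A A) A) E) = shmap (evalC (castF E)).
Proof. subst. by rewrite /= shmap_id. Qed.

Lemma G_comp k j (A1 A2 A3 : ob B) (w1 : Word A1 A1) (w2 : Word A2 A2) (w3 : Word A3 A3) m1 m2 :
  Good k w1 w2 m1 -> Good j w2 w3 m2 -> Good (k + j) w1 w3 (m1 >>> m2).
Proof.
case=> m1' [H1 ->] [m2' [H2 ->]].
exists (m1' >>> m2'); split; first exact: Req_add H1 H2.
by rewrite !tA -(tA _ (Ci w2) (Cm w2)) CiCm t1r.
Qed.

Lemma G_cell (A : ob B) (w w' : Word A A) (c : FCell w w') : Good 0 w w' (shmap (evalC c)).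
Proof.
exists (eqmor (f_equal (existT (fun A => NW A A) A) (appE c (NNil A)))); split; first exact: Req0.
rewrite eqmor_cast /Cm /Ci -!shmap_comp; congr shmap.
exact: (coh c (FVcomp (FVcomp (ncell w) (castF _)) (finv (ncell w')))).
Qed.

Lemma G_unitL (A : ob B) (v : Word A A) :
  Good 0 (WComp (WUnit A) v) (WComp v (WUnit A)) (theta (unit1 A) (evalW v)).
Proof.
have -> : theta (unit1 A) (evalW v) = shmap (evalC (FVcomp (FLunit v) (FRunitInv v))) :> tmor S _ _.
  rewrite /= shmap_comp.
  rewrite -{1}(t1r (theta _ _)) -(shmap_id S (comp1 (evalW v) (unit1 A))) -(runit_iso1 (evalW v)).
  by rewrite shmap_comp -(theta_unit S (evalW v)) !tA theta_invol t1l.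
exact: G_cell.
Qed.

Lemma nat_red k (A C : ob B) (u u' : Word A C) (v v' : Word C A) (a : FCell u u') (b : FCell v v') :
  Good k (WComp u' v') (WComp v' u') (theta (evalW u') (evalW v')) ->
  Good k (WComp u v) (WComp v u) (theta (evalW u) (evalW v)).
Proof.
move=> H.
have HF : evalC (FVcomp (FWhiskR u b) (FWhiskL v' a)) = evalC b <o> evalC a by rewrite /= -hsplit.
have [h1 _] := fiso (FVcomp (FWhiskR u b) (FWhiskL v' a)).
have HG : evalC (FVcomp (FWhiskR v a) (FWhiskL u' b)) = evalC a <o> evalC b by rewrite /= -hsplit.
have E : theta (evalW u) (evalW v) = shmap (evalC (FVcomp (FWhiskR v a) (FWhiskL u' b)))
   >>> theta (evalW u') (evalW v') >>> shmap (evalC (finv (FVcomp (FWhiskR u b) (FWhiskL v' a)))) :> tmor S _ _.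
  by rewrite HG theta_nat -tA -shmap_comp -HF h1 shmap_id t1r.
have := G_comp (G_comp (G_cell (FVcomp (FWhiskR v a) (FWhiskL u' b))) H)
               (G_cell (finv (FVcomp (FWhiskR u b) (FWhiskL v' a)))).
by rewrite add0n addn0 -E.
Qed.

Lemma letters_app A C (u : Word A C) D (s : NW C D) :
  letters (embed (app u s)) = letters u ++ letters (embed s).
Proof. by elim: u D s => //= A0 C0 D0 u IHu v IHv D s; rewrite IHu IHv catA. Qed.

Lemma app_embed A C (u : Word A C) D (s : NW C D) E (t : NW D E) :
  app (embed (app u s)) t = app u (app (embed s) t).
Proof. by elim: u D s E t => //= A0 C0 D0 u IHu v IHv D s E t; rewrite IHu IHv. Qed.

Lemma app_embed_nil A C (n : NW A C) : app (embed n) (NNil C) = n.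
Proof. by elim: n => //= A0 C0 D0 M t ->. Qed.

Lemma G_edge_n (A C : ob B) (X : @hom B A C) (q : NW C A) :
  Good 1 (WComp (WEdge X) (embed q)) (WComp (embed q) (WEdge X)) (theta X (evalW (embed q))).
Proof.
have E : app (embed (app (embed q) (NNil A))) (NCons X (NNil C)) = app (embed q) (NCons X (NNil C)).
  by rewrite app_embed.
exists (RM 1 (nx (WComp (WEdge X) (embed q))) >>> eqmor (f_equal (existT (fun A => NW A A) C) E)).
split; first by exists (f_equal (existT (fun A => NW A A) C) E).
rewrite eqmor_cast /RM /= /Cm /Ci.
rewrite (shcoh (ncell (WComp (WEdge X) (embed q))) (FWhiskL (WEdge X) (ncell (embed q)))) /=.
rewrite !tA theta_nat t1r -!tA -!shmap_comp.
rewrite -{1}(t1r (theta _ _)); congr tcomp.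
rewrite -shmap_id; congr shmap; symmetry.
exact: (coh (FVcomp (FWhiskR (WEdge X) (ncell (embed q)))
  (FVcomp (FVcomp (FWhiskL (embed (app (embed q) (NNil A))) (FRunitInv (WEdge X)))
                  (norm (embed (app (embed q) (NNil A))) (NCons X (NNil C))))
          (FVcomp (castF E) (finv (ncell (WComp (embed q) (WEdge X))))))) (FId _)).
Qed.

Lemma G_edge (A C : ob B) (X : @hom B A C) (v : Word C A) :
  Good 1 (WComp (WEdge X) v) (WComp v (WEdge X)) (theta X (evalW v)).
Proof. exact: (nat_red (FId (WEdge X)) (ncell v) (G_edge_n X (app v (NNil A)))). Qed.

Lemma G_normal (A C : ob B) (p : NW A C) (v : Word C A) :
  Good (size (letters (embed p))) (WComp (embed p) v) (WComp v (embed p))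
       (theta (evalW (embed p)) (evalW v)).
Proof.
elim: p v => [A0 | A0 C0 D0 X p' IH] v; first exact: G_unitL.
have H : theta (comp1 X (evalW (embed p'))) (evalW v) =
   shmap (assoc X (evalW (embed p')) (evalW v)) >>> theta X (comp1 (evalW (embed p')) (evalW v))
   >>> shmap (assoc (evalW (embed p')) (evalW v) X)
   >>> theta (evalW (embed p')) (comp1 (evalW v) X)
   >>> shmap (assoc (evalW v) X (evalW (embed p'))) :> tmor S _ _.
  have Hx := theta_hex S X (evalW (embed p')) (evalW v).
  rewrite !tA in Hx.
  rewrite -Hx -(tA _ (theta _ _) (theta _ _)) theta_invol t1r -tA -shmap_comp assoc_iso2 shmap_id t1r.
  done.
have G := G_comp (G_comp (G_comp (G_comp (G_cell (FAssoc (WEdge X) (embed p') v))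
   (G_edge X (WComp (embed p') v))) (G_cell (FAssoc (embed p') v (WEdge X))))
   (IH (WComp v (WEdge X)))) (G_cell (FAssoc v (WEdge X) (embed p'))).
rewrite !addn0 add0n add1n in G.
rewrite /= H. exact: G.
Qed.

Lemma G_theta (A C : ob B) (u : Word A C) (v : Word C A) :
  Good (size (letters u)) (WComp u v) (WComp v u) (theta (evalW u) (evalW v)).
Proof.
move: (G_normal (app u (NNil C)) v); rewrite letters_app /= cats0 => H.
exact: (nat_red (ncell u) (FId v) H).
Qed.

Lemma Inv (A A' : ob B) (w : Word A A) (w' : Word A' A') (f : FSh w w') :
  Good (shift f) w w' (evalSh S f).
Proof.
elim: f => /=.
- move=> A0 w0; have := G_cell (FId w0); by rewrite /= shmap_id.
- move=> A1 A2 A3 w1 w2 w3 g IHg h IHh; exact: G_comp IHg IHh.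
- move=> A0 w0 w0' c; exact: G_cell.
- move=> A0 C0 u v; exact: G_theta.
Qed.

Definition len (y : ShN) := size (letters (embed (projT2 y))).

Lemma len_rotG A D (n : NW A D) (e : D = A) : len (projT1 (rotG n e)) = size (letters (embed n)).
Proof.
case: n e => [A0|A0 C0 D0 X t] e.
- by rewrite (proof_irrelevance _ e erefl).
- subst D0. by rewrite /len /= letters_app /= size_cat /= addn1.
Qed.

Lemma len_rotN k x : len (rotN k x) = len x.
Proof.
elim: k x => [|k IH] x //.
change (len (rotN k (projT1 (rotSh x))) = len x).
by rewrite IH /rotSh len_rotG.
Qed.

Lemma Req_eqmor k x z z' m (e : z = z') : Req k x z m -> Req k x z' (m >>> eqmor e).
Proof. subst. by rewrite /= t1r. Qed.

Lemma Req_tr k x y (E : x = y) : Req k x x (tid _) -> Req k y y (tid _).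
Proof. by subst. Qed.

Lemma cancel_good (A A' : ob B) (w : Word A A) (w' : Word A' A') a b :
  Cm w >>> a >>> Ci w' = Cm w >>> b >>> Ci w' -> a = b.
Proof.
move=> H; have := congr1 (fun t => Ci w >>> t >>> Cm w') H.
by rewrite /= !tA !CiCm !t1l -!tA !CiCm !t1r.
Qed.

Lemma Per (y : ShN) : Req (len y) y y (tid _).
Proof.
case: y => A n.
have G1 := G_theta (embed n) (WUnit A).
have G0 : Good 0 (WComp (embed n) (WUnit A)) (WComp (WUnit A) (embed n))
   (theta (evalW (embed n)) (unit1 A)).
  have -> : theta (evalW (embed n)) (unit1 A) =
     shmap (evalC (FVcomp (FRunit (embed n)) (FLunitInv (embed n)))) :> tmor S _ _.
    by rewrite /= shmap_comp -(theta_unit S) -tA -shmap_comp lunit_iso1 shmap_id t1r.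
  exact: G_cell.
case: G1 => m1 [R1 E1]; case: G0 => m0 [R0 E0].
have Hm : m1 = m0 by apply: cancel_good; rewrite -E1 -E0.
case: (Req0_inv R0) => e He.
subst m1 m0.
have R2 := Req_eqmor (esym e) R1.
rewrite (eqmor_comp _ _ erefl) /= in R2.
apply: (Req_tr _ R2).
exact: (f_equal (existT (fun A => NW A A) A) (app_embed_nil n)).
Qed.

Lemma Per_mult (y : ShN) q : Req (q * len y) y y (tid _).
Proof.
elim: q => [|q IH]; first exact: (Req0 erefl).
rewrite mulSn; have := Req_add (Per y) IH; by rewrite t1l.
Qed.

Lemma Req_mod k j x z m1 m2 : Req k x z m1 -> Req j x z m2 -> k = j %[mod len x] -> m1 = m2.
Proof.
move=> H1 H2 Hkj.
have Hr : Req (k %% len x) x (rotN (k %% len x) x) (RM (k %% len x) x).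
  by exists erefl; rewrite /= t1r.
have Hp q : Req (k %% len x + q * len x) x (rotN (k %% len x) x) (RM (k %% len x) x).
  by have := Req_add Hr (Per_mult (rotN (k %% len x) x) q); rewrite len_rotN t1r.
have Hk := Hp (k %/ len x); have Hj := Hp (j %/ len x).
rewrite addnC -divn_eq in Hk.
have Ej : k %% len x + j %/ len x * len x = j by rewrite Hkj addnC -divn_eq.
rewrite Ej in Hj.
case: (Req_uniq H1 Hk) => e1 ->; case: (Req_uniq H2 Hj) => e2 ->.
by rewrite (proof_irrelevance _ e1 e2).
Qed.

Theorem part1 (D : Diagram B) : same_cyc_perm D -> image_commutes S D.
Proof.
move=> H [A w] [A' w'] f g Cf Cg.
have Hs := H _ _ f g Cf Cg.
case: (Inv f) => m1 [R1 E1]; case: (Inv g) => m2 [R2 E2].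
rewrite E1 E2; congr (_ >>> _ >>> _).
apply: (Req_mod R1 R2).
by rewrite /len /= letters_app cats0.
Qed.

Lemma lettersC (A C : ob B) (u v : Word A C) (c : FCell u v) : letters u = letters v.
Proof. elim: c => //= *; try congruence; by rewrite ?catA ?cats0. Qed.

Lemma iter_rot1_cat (T : Type) (s1 s2 : seq T) : iter (size s1) (rot 1) (s1 ++ s2) = s2 ++ s1.
Proof.
elim: s1 s2 => [|x s1 IH] s2 /=; first by rewrite cats0.
by rewrite -iterS iterSr rot1_cons rcons_cat IH cat_rcons.
Qed.

Lemma lettersF (A A' : ob B) (w : Word A A) (w' : Word A' A') (f : FSh w w') :
  letters w' = iter (shift f) (rot 1) (letters w).
Proof.
elim: f => //=.
- by move=> A1 A2 A3 w1 w2 w3 g IHg h IHh; rewrite IHh IHg addnC iterD.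
- by move=> A0 w0 w0' c; rewrite (lettersC c).
- by move=> A0 C0 u v; rewrite iter_rot1_cat.
Qed.

Lemma iter_rot_nil (T : Type) k : iter k (rot 1) ([::] : seq T) = [::].
Proof. by elim: k => //= k ->. Qed.

Lemma iter_rot_le (T : Type) (l : seq T) k : k <= size l -> iter k (rot 1) l = rot k l.
Proof.
elim: k => [|k IH] Hk /=; first by rewrite rot0.
by rewrite IH ?(ltnW Hk) // -rotS.
Qed.

Lemma iter_rot_mult (T : Type) (l : seq T) q : iter (q * size l) (rot 1) l = l.
Proof.
elim: q => [|q IH] //=.
by rewrite mulSn iterD IH iter_rot_le // rot_size.
Qed.

Lemma iter_rot_mod (T : Type) (l : seq T) k : 0 < size l -> iter k (rot 1) l = rot (k %% size l) l.
Proof.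
move=> Hl.
rewrite {1}(divn_eq k (size l)) addnC iterD iter_rot_mult iter_rot_le //.
exact: ltnW (ltn_pmod _ Hl).
Qed.

Lemma shift0 (A A' : ob B) (w : Word A A) (w' : Word A' A') (f : FSh w w') :
  letters w = [::] -> shift f = 0.
Proof.
elim: f => //=.
- move=> A1 A2 A3 w1 w2 w3 g IHg h IHh H.
  rewrite IHg // IHh //. by rewrite (lettersF g) H iter_rot_nil.
- by move=> A0 C0 u v; case: (letters u).
Qed.

Lemma aper_eq (T : Type) (Xs : seq T) a b : aperiodic Xs -> a < size Xs -> b < size Xs ->
  rot a Xs = rot b Xs -> a = b.
Proof.
move=> Hap.
wlog Hab : a b / a <= b.
  move=> W Ha Hb E; case: (leqP a b) => H; first exact: W.
  symmetry; apply: W => //; exact: ltnW.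
move=> Ha Hb E.
case: (ltngtP a b) => // Hlt; [|by move: Hab; rewrite leqNgt Hlt].
exfalso.
have E2 : rot b Xs = rot (b - a) (rot a Xs) by rewrite -rotD subnK // ltnW.
rewrite E2 rot_rot in E.
have E3 := rot_inj E.
apply: (Hap (b - a)); last by rewrite -E3.
by rewrite subn_gt0 Hlt /= (leq_ltn_trans (leq_subr a b) Hb).
Qed.

Lemma comp_src (Xs : seq (Edge B)) (D : Diagram B) : diagram_on Xs D ->
  forall x y (f : FShO x y), Composite D x y f ->
  shift f = 0 \/ exists k, letters (projT2 x) = rot k Xs.
Proof.
move=> Hon x y f; case=> [x0|x0 y0 z0 f0 g0 Hin _]; first by left.
right; exact: (proj1 (Hon _ Hin)).
Qed.

Lemma key_case (Xs : seq (Edge B)) (x y : ShObj B) (f g : FShO x y) k :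
  aperiodic Xs -> letters (projT2 x) = rot k Xs ->
  shift f = shift g %[mod size (letters (projT2 x))].
Proof.
case: x f g => A w f g Hap /= Hk.
have Ef := lettersF f; have Eg := lettersF g.
case Hn: (size (letters w)) => [|n].
  have H0 : letters w = [::] by move: Hn; case: (letters w).
  by rewrite (shift0 f H0) (shift0 g H0).
have Hp : 0 < size (letters w) by rewrite Hn.
rewrite -Hn.
rewrite !(iter_rot_mod _ Hp) in Ef Eg.
rewrite Ef Hk !(rot_rot _ k) in Eg.
have E := rot_inj Eg.
have Hs : size (letters w) = size Xs by rewrite Hk size_rot.
rewrite size_rot in E; rewrite Hs.
have Hp' : 0 < size Xs by rewrite -Hs.
by apply: (aper_eq Hap); rewrite ?ltn_pmod.
Qed.

Lemma same_from_aper (Xs : seq (Edge B)) (D : Diagram B) :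
  aperiodic Xs -> diagram_on Xs D -> same_cyc_perm D.
Proof.
move=> Hap Hon x y f g Cf Cg.
case: (comp_src Hon Cf) => [Hf|[k Hk]]; last exact: key_case Hap Hk.
case: (comp_src Hon Cg) => [Hg|[k Hk]]; first by rewrite Hf Hg.
symmetry; exact: key_case Hap Hk.
Qed.

End Coh.

Theorem mainTheorem4 (B : Bicat) (S : Shadow B) :
  (forall D : Diagram B, same_cyc_perm D -> image_commutes S D) /\
  (forall Xs : seq (Edge B), aperiodic Xs ->
     forall D : Diagram B, diagram_on Xs D -> image_commutes S D).
Proof.
split.
- move=> D; exact: part1.
- move=> Xs Hap D Hon; apply: part1; exact: same_from_aper Hap Hon.
Qed.
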